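(* Let $T$ be a valid physical transformation of a system of $N$ elementary toy systems that is non-entangling and preserves the amount of information stored in each elementary subsystem, i.e. for every valid epistemic state $E$ and every $i\in\{1,\dots,N\}$ the marginal of $T(E)$ on subsystem $i$ has the same number of ontic states as the marginal of $E$ on subsystem $i$. Then $T$ is local: there exist permutations $T_1,\dots,T_N$ of $\{1,2,3,4\}$ such that $T(o_1,\dots,o_N) = (T_1(o_1),\dots,T_N(o_N))$ for all ontic states.
   Context: In Spekkens' toy theory, ontic states of $N$ elementary systems are elements of $\{1,2,3,4\}^N$, and an epistemic state is a set of ontic states (its ontic basis); only certain epistemic states are valid (those satisfying the knowledge balance principle globally and on all subsystems; equivalently, those equal to the set of ontic states fixed by some toy stabilizer group). The marginal of an epistemic state on subsystem $i$ is its projection onto the $i$-th coordinate. A physical transformation is a map $T$ on ontic states, acting on epistemic states by $T(E) = \{T(o): o\in E\}$; it is valid if it maps valid epistemic states to valid epistemic states, and valid transformations are permutations of the ontic states. A product state with respect to a division of the systems into groups $A_1,\dots,A_k$ is a Cartesian product of valid epistemic states on the groups. A transformation is non-entangling if, for every division into groups $A_1,\dots,A_k$, it maps every product state with respect to that division to a product state with respect to the same division. *)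

(* Defs.v *)
(* Spekkens' toy theory via Pusey's toy stabilizer formalism. *)
From mathcomp Require Import all_boot all_fingroup.
Set Implicit Arguments. Unset Strict Implicit. Unset Printing Implicit Defensive.

(* Ontic states of one elementary system: 'I_4, where k : 'I_4 stands for the
   ontic state k+1 of {1,2,3,4}.  Ontic states of N systems: functions 'I_N -> 'I_4. *)
Definition ontic (N : nat) := {ffun 'I_N -> 'I_4}.

Definition epistemic (N : nat) := {set ontic N}.

(* Single-system toy operator labels: 0 = I, 1 = X, 2 = Y, 3 = Z, with
   value tables (on ontic states 1,2,3,4)
     I = (+,+,+,+), X = (+,-,+,-), Y = (+,-,-,+), Z = (+,+,-,-).
   [label_neg l o] is true iff the value of l at ontic state o is -1. *)
Definition label_neg (l o : 'I_4) : bool :=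
  match val l with
  | 1 => odd o
  | 2 => (val o == 1) || (val o == 2)
  | 3 => 2 <= val o
  | _ => false
  end.

(* Toy operators on N systems: a sign (true = minus) and a tensor product of labels. *)
Definition toyop (N : nat) := (bool * {ffun 'I_N -> 'I_4})%type.

Definition toy_neg (N : nat) (g : toyop N) (o : ontic N) : bool :=
  g.1 (+) \big[addb/false]_(i < N) label_neg (g.2 i) (o i).

(* Product of single-system labels (Klein four group: XY = Z, XZ = Y, YZ = X). *)
Definition klein (a b : 'I_4) : 'I_4 :=
  if val a == 0 then b else if val b == 0 then a
  else if a == b then inord 0 else inord (6 - val a - val b).

Definition toymul (N : nat) (g h : toyop N) : toyop N :=
  (g.1 (+) h.1, [ffun i => klein (g.2 i) (h.2 i)]).

(* Two toy operators commute iff (as Pauli operators) they anticommute on an even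
   number of sites. *)
Definition toy_commute (N : nat) (g h : toyop N) : bool :=
  ~~ odd #|[set i : 'I_N | [&& val (g.2 i) != 0, val (h.2 i) != 0 & g.2 i != h.2 i]]|.

Definition toy_id (N : nat) : toyop N := (false, [ffun => ord0]).
Definition toy_minus_id (N : nat) : toyop N := (true, [ffun => ord0]).

Definition toy_stabilizer (N : nat) (S : {set toyop N}) : Prop :=
  [/\ toy_id N \in S,
      {in S &, forall g h, toymul g h \in S},
      {in S &, forall g h, toy_commute g h} &
      toy_minus_id N \notin S].

Definition fixed_set (N : nat) (S : {set toyop N}) : epistemic N :=
  [set o | [forall g in S, ~~ toy_neg g o]].

Definition supported_in (N : nat) (B : {set 'I_N}) (g : toyop N) : bool :=
  [forall i, (i \notin B) ==> (val (g.2 i) == 0)].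

(* A valid epistemic state of the subsystem B, embedded as a subset of the
   global ontic space (i.e. as F x (all ontic states of the complement)). *)
Definition valid_on (N : nat) (B : {set 'I_N}) (E : epistemic N) : Prop :=
  exists S : {set toyop N},
    [/\ toy_stabilizer S, {in S, forall g, supported_in B g} & E = fixed_set S].

Definition valid (N : nat) (E : epistemic N) : Prop := valid_on [set: 'I_N] E.

Definition marginal (N : nat) (i : 'I_N) (E : epistemic N) : {set 'I_4} :=
  [set (o : ontic N) i | o in E].

Definition act (N : nat) (T : {perm ontic N}) (E : epistemic N) : epistemic N :=
  T @: E.

Definition valid_transformation (N : nat) (T : {perm ontic N}) : Prop :=
  forall E : epistemic N, valid E -> valid (act T E).

Definition product_state (N : nat) (P : {set {set 'I_N}}) (E : epistemic N) : Prop :=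
  exists F : {set 'I_N} -> epistemic N,
    (forall B, B \in P -> valid_on B (F B)) /\
    E = [set o | [forall B in P, o \in F B]].

Definition non_entangling (N : nat) (T : {perm ontic N}) : Prop :=
  forall P : {set {set 'I_N}}, partition P [set: 'I_N] ->
  forall E : epistemic N, product_state P E -> product_state P (act T E).

Definition preserves_local_information (N : nat) (T : {perm ontic N}) : Prop :=
  forall (E : epistemic N) (i : 'I_N), valid E ->
    #|marginal i (act T E)| = #|marginal i E|.

(* Main.v *)
Require Import Defs.
From mathcomp Require Import all_boot all_fingroup.

Set Implicit Arguments. Unset Strict Implicit. Unset Printing Implicit Defensive.

Definition cyl (N : nat) (i : 'I_N) (A : {set 'I_4}) : epistemic N :=
  [set o : ontic N | o i \in A].

Definition box (N : nat) (C : 'I_N -> {set 'I_4}) : epistemic N :=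
  [set o : ontic N | [forall j, o j \in C j]].

Definition Psing (N : nat) : {set {set 'I_N}} := [set [set j] | j : 'I_N].

Definition pairs (l a : 'I_4) : {set 'I_4} :=
  [set x | label_neg l x == label_neg l a].

Definition gen (N : nat) (i : 'I_N) (l : 'I_4) (s : bool) : toyop N :=
  (s, [ffun k => if k == i then l else ord0]).

Lemma neg_supp N (j : 'I_N) (g : toyop N) (o : ontic N) :
  supported_in [set j] g -> toy_neg g o = g.1 (+) label_neg (g.2 j) (o j).
Proof.
move=> /forallP H; rewrite /toy_neg (bigD1 j) //= big1 ?addbF // => k kj.
have := H k; rewrite in_set1 (negbTE kj) /=.
by case: (g.2 k) => [[|m] Hm].
Qed.

Lemma neg_id N (o : ontic N) : toy_neg (toy_id N) o = false.
Proof. by rewrite /toy_neg big1 // => k _; rewrite ffunE. Qed.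

Lemma marg_cyl N (i : 'I_N) (C : {set 'I_4}) : marginal i (cyl i C) = C.
Proof.
apply/setP => x; apply/imsetP/idP.
- by case=> o; rewrite inE => Ho ->.
- by move=> Hx; exists [ffun _ => x]; rewrite ?inE ffunE.
Qed.

Lemma valid_single N (j : 'I_N) X : valid_on [set j] X -> X = cyl j (marginal j X).
Proof.
case=> S [_ Hsupp ->].
set C := [set x : 'I_4 | [forall g in S, ~~ (g.1 (+) label_neg (g.2 j) x)]].
suff -> : fixed_set S = cyl j C by rewrite marg_cyl.
apply/setP=> o; rewrite !inE; apply: eq_forallb => g.
case: (boolP (g \in S)) => // gS; by rewrite (@neg_supp _ j) // Hsupp.
Qed.

Lemma part_single N : partition (Psing N) [set: 'I_N].
Proof.
apply/and3P; split.
- apply/eqP/setP => x; rewrite inE; apply/bigcupP; exists [set x]; last by rewrite set11.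
  by apply: imset_f.
- apply/trivIsetP => A B /imsetP[x _ ->] /imsetP[y _ ->] neq.
  rewrite disjoints1 inE; apply: contraNneq neq => ->; by [].
- apply/imsetP => [[x _]] /setP /(_ x); by rewrite !inE eqxx.
Qed.

Lemma prod_box N E : product_state (Psing N) E -> exists C, E = box C.
Proof.
case=> F [HF ->]; exists (fun j => marginal j (F [set j])).
apply/setP => o; rewrite !inE; apply/forallP/forallP.
- move=> H j; have HB : [set j] \in Psing N by apply: imset_f.
  by have := H [set j]; rewrite HB /= {1}(valid_single (HF _ HB)) inE.
- move=> H B; apply/implyP => HB; case/imsetP: (HB) => j _ Bj.
  subst B; rewrite (valid_single (HF _ HB)) inE; exact: H.
Qed.

Lemma marg_box N (C : 'I_N -> {set 'I_4}) o0 j :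
  o0 \in box C -> marginal j (box C) = C j.
Proof.
move=> H0; apply/setP => x; apply/imsetP/idP.
- by case=> o; rewrite inE => /forallP H ->; exact: H.
- move=> Hx; exists [ffun k => if k == j then x else o0 k]; last by rewrite ffunE eqxx.
  rewrite inE; apply/forallP => k; rewrite ffunE; case: eqP => [->//|_].
  by move: H0; rewrite inE => /forallP; apply.
Qed.

Lemma mul_id_l N (h : toyop N) : toymul (toy_id N) h = h.
Proof. case: h => s f; rewrite /toymul /=; congr (_, _); by apply/ffunP => i; rewrite !ffunE. Qed.

Lemma mul_id_r N (h : toyop N) : toymul h (toy_id N) = h.
Proof.
case: h => s f; rewrite /toymul /= addbF; congr (_, _); apply/ffunP => i; rewrite !ffunE.
rewrite /klein; case: ifP => // /eqP H; by apply: val_inj.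
Qed.

Lemma mul_self N (h : toyop N) : toymul h h = toy_id N.
Proof.
case: h => s f; rewrite /toymul /= addbb; congr (_, _); apply/ffunP => i; rewrite !ffunE.
rewrite /klein; case: ifP => [/eqP H|H]; first by apply: val_inj.
rewrite H eqxx; apply: val_inj; exact: (@inordK 3 0).
Qed.

Lemma comm_id_l N (h : toyop N) : toy_commute (toy_id N) h.
Proof.
rewrite /toy_commute (_ : [set _ | _] = set0) ?cards0 //.
by apply/setP => i; rewrite !inE ffunE.
Qed.

Lemma comm_id_r N (h : toyop N) : toy_commute h (toy_id N).
Proof.
rewrite /toy_commute (_ : [set _ | _] = set0) ?cards0 //.
by apply/setP => i; rewrite !inE ffunE /= andbF.
Qed.

Lemma comm_refl N (h : toyop N) : toy_commute h h.
Proof.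
rewrite /toy_commute (_ : [set _ | _] = set0) ?cards0 //.
by apply/setP => i; rewrite !inE eqxx !andbF.
Qed.

Lemma supp_id N (B : {set 'I_N}) : supported_in B (toy_id N).
Proof. by apply/forallP => k; apply/implyP => _; rewrite ffunE. Qed.

Lemma supp_gen N (B : {set 'I_N}) i l s : i \in B -> supported_in B (gen i l s).
Proof.
move=> iB; apply/forallP => k; apply/implyP => kB; rewrite ffunE.
case: (eqVneq k i) => [ki|//]; by rewrite ki iB in kB.
Qed.

Lemma valid_cyl N (B : {set 'I_N}) i (l a : 'I_4) :
  i \in B -> val l != 0 -> valid_on B (cyl i (pairs l a)).
Proof.
move=> iB l0; exists [set toy_id N; gen i l (label_neg l a)]; split.
- split.
  + by rewrite !inE eqxx.
  + move=> g h; rewrite !inE => /orP[]/eqP-> /orP[]/eqP->;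
      by rewrite ?mul_id_l ?mul_id_r ?mul_self ?eqxx ?orbT.
  + move=> g h; rewrite !inE => /orP[]/eqP-> /orP[]/eqP->;
      by rewrite ?comm_id_l ?comm_id_r ?comm_refl.
  + rewrite !inE; apply/norP; split; first by [].
    apply/negP => /eqP [] _ /ffunP /(_ i); rewrite !ffunE eqxx => E.
    by move: l0; rewrite -E.
- move=> g; rewrite !inE => /orP[]/eqP->; [exact: supp_id | exact: supp_gen].
- apply/setP => o; rewrite !inE; apply/idP/forallP.
  + move=> H g; apply/implyP; rewrite !inE => /orP[]/eqP->; first by rewrite neg_id.
    rewrite (@neg_supp _ i); last exact: supp_gen (set11 i).
    rewrite /= ffunE eqxx; move: H.
    by case: (label_neg l (o i)) (label_neg l a) => [] [].
  + move=> H; have := H (gen i l (label_neg l a)); rewrite !inE eqxx orbT /=.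
    rewrite (@neg_supp _ i); last exact: supp_gen (set11 i).
    rewrite /= ffunE eqxx.
    by case: (label_neg l (o i)) (label_neg l a) => [] [].
Qed.

Lemma valid_T N (B : {set 'I_N}) : valid_on B [set: ontic N].
Proof.
exists [set toy_id N]; split.
- split.
  + by rewrite !inE.
  + by move=> g h; rewrite !inE => /eqP-> /eqP->; rewrite mul_id_l.
  + by move=> g h; rewrite !inE => /eqP-> /eqP->; rewrite comm_id_l.
  + by rewrite !inE.
- by move=> g; rewrite !inE => /eqP->; exact: supp_id.
- apply/setP => o; rewrite !inE; apply/esym/forallP => g; apply/implyP.
  by rewrite inE => /eqP->; rewrite neg_id.
Qed.

Lemma marg_cyl_other N (i j : 'I_N) (A : {set 'I_4}) a :
  j != i -> a \in A -> marginal j (cyl i A) = setT.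
Proof.
move=> ji aA; apply/setP => y; rewrite inE; apply/imsetP.
exists [ffun k => if k == i then a else y]; rewrite ?inE ffunE ?eqxx //.
by rewrite (negbTE ji).
Qed.

Lemma pair_mem (l a : 'I_4) : a \in pairs l a.
Proof. by rewrite inE. Qed.

Lemma T_cyl N (T : {perm ontic N}) i (l a : 'I_4) :
  non_entangling T -> preserves_local_information T -> val l != 0 ->
  exists C : {set 'I_4}, T @: cyl i (pairs l a) = cyl i C /\ #|C| = #|pairs l a|.
Proof.
move=> NE PL l0.
set A := pairs l a.
have Hprod : product_state (Psing N) (cyl i A).
  exists (fun B : {set 'I_N} => if i \in B then cyl i A else setT); split.
  - move=> B _; case: ifP => iB; [exact: valid_cyl | exact: valid_T].
  - apply/setP => o; rewrite !inE; apply/idP/forallP.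
    + move=> Ho B; apply/implyP => _; case: ifP => _; by rewrite ?inE.
    + move=> H; have HB : [set i] \in Psing N by apply: imset_f.
      by have := H [set i]; rewrite HB set11 /= !inE.
have [C' HC'] := prod_box (NE _ (part_single N) _ Hprod).
have H0 : T [ffun _ => a] \in box C'.
  rewrite -HC'; apply: imset_f; by rewrite inE ffunE pair_mem.
have Hval : valid (cyl i A) by apply: valid_cyl.
have HM j : #|C' j| = #|marginal j (cyl i A)|.
  by rewrite -(marg_box j H0) -HC' PL.
have Cfull j : j != i -> C' j = setT.
  move=> ji; apply/eqP; rewrite eqEcard subsetT HM (marg_cyl_other ji (pair_mem l a)).
  by rewrite leqnn.
exists (C' i); split; last by rewrite HM marg_cyl.
rewrite [LHS]HC'; apply/setP => o; rewrite !inE; apply/forallP/idP.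
- by move=> H; exact: H.
- move=> Hi j; case: (eqVneq j i) => [->//| ji]; by rewrite (Cfull j ji) inE.
Qed.

Definition l1 : 'I_4 := Ordinal (isT : 1 < 4).
Definition l3 : 'I_4 := Ordinal (isT : 3 < 4).

Lemma card_pairs3 (a : 'I_4) : #|pairs l3 a| = 2.
Proof.
rewrite -sum1_card big_mkcond /= !big_ord_recr big_ord0 /= !inE /=.
by case: a => [[|[|[|[|a]]]] Ha].
Qed.

Lemma card_pairs1 (a : 'I_4) : #|pairs l1 a| = 2.
Proof.
rewrite -sum1_card big_mkcond /= !big_ord_recr big_ord0 /= !inE /=.
by case: a => [[|[|[|[|a]]]] Ha].
Qed.

Lemma pairsI (a : 'I_4) : pairs l3 a :&: pairs l1 a = [set a].
Proof.
apply/setP => x; rewrite !inE /label_neg /=.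
case: a => [[|[|[|[|a]]]] Ha] //; case: x => [[|[|[|[|x]]]] Hx] //.
Qed.

Lemma cylI N (i : 'I_N) A B : cyl i A :&: cyl i B = cyl i (A :&: B).
Proof. by apply/setP => o; rewrite !inE. Qed.

Lemma T_single N (T : {perm ontic N}) i (a : 'I_4) :
  non_entangling T -> preserves_local_information T ->
  exists t, T @: cyl i [set a] = cyl i [set t].
Proof.
move=> NE PL.
have [C1 [H1 c1]] := T_cyl i a NE PL (isT : val l3 != 0).
have [C2 [H2 c2]] := T_cyl i a NE PL (isT : val l1 != 0).
rewrite card_pairs3 in c1.
rewrite card_pairs1 in c2.
have HI : T @: cyl i [set a] = cyl i (C1 :&: C2).
  rewrite -pairsI -cylI imsetI; last by move=> x y _ _; apply: perm_inj.
  by rewrite H1 H2 cylI.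
have C12 : C1 != C2.
  apply/negP => /eqP E.
  have : cyl i (pairs l3 a) = cyl i (pairs l1 a).
    apply: (imset_inj (@perm_inj _ T)); by rewrite H1 H2 E.
  move/(congr1 (marginal i)); rewrite !marg_cyl => E'.
  have := pairsI a; rewrite E' setIid => E''.
  by move: (card_pairs1 a); rewrite E'' cards1.
have ne : #|C1 :&: C2| != 0.
  have : T [ffun _ => a] \in cyl i (C1 :&: C2).
    by rewrite -HI; apply: imset_f; rewrite inE ffunE set11.
  rewrite inE => Hin; apply/eqP => /eqP; rewrite cards_eq0 => /eqP E.
  by rewrite E inE in Hin.
have le1 : #|C1 :&: C2| <= 1.
  rewrite leqNgt; apply/negP => H2lt.
  have E1 : C1 :&: C2 == C1 by rewrite eqEcard subsetIl c1.
  have E2 : C1 :&: C2 == C2 by rewrite eqEcard subsetIr c2.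
  by move: C12; rewrite -(eqP E1) {1}(eqP E2) eqxx.
have : #|C1 :&: C2| == 1 by rewrite eqn_leq le1 lt0n ne.
case/cards1P => t Ht; exists t; by rewrite HI Ht.
Qed.

Theorem mainTheorem9 (N : nat) (T : {perm ontic N}) :
  valid_transformation T ->
  non_entangling T ->
  preserves_local_information T ->
  exists Ts : 'I_N -> {perm 'I_4},
    forall o : ontic N, T o = [ffun i => Ts i (o i)].
Proof.
move=> _ NE PL.
pose f (i : 'I_N) (a : 'I_4) := T [ffun _ => a] i.
have key o i : T o i = f i (o i).
  have [t Ht] := T_single i (o i) NE PL.
  have h1 : T o \in cyl i [set t].
    by rewrite -Ht; apply: imset_f; rewrite inE set11.
  have h2 : T [ffun _ => o i] \in cyl i [set t].
    by rewrite -Ht; apply: imset_f; rewrite inE ffunE set11.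
  rewrite /f; move: h1 h2; rewrite !inE => /eqP -> /eqP ->; by [].
have finj i : injective (f i).
  move=> a b Eab.
  have [ta Ha] := T_single i a NE PL.
  have [tb Hb] := T_single i b NE PL.
  have fa : f i a = ta.
    have : T [ffun _ => a] \in cyl i [set ta].
      by rewrite -Ha; apply: imset_f; rewrite inE ffunE set11.
    by rewrite !inE => /eqP.
  have fb : f i b = tb.
    have : T [ffun _ => b] \in cyl i [set tb].
      by rewrite -Hb; apply: imset_f; rewrite inE ffunE set11.
    by rewrite !inE => /eqP.
  have : cyl i [set a] = cyl i [set b].
    apply: (imset_inj (@perm_inj _ T)); by rewrite Ha Hb -fa -fb Eab.
  move/(congr1 (marginal i)); rewrite !marg_cyl; exact: set1_inj.
exists (fun i => perm (finj i)) => o; apply/ffunP => i.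
by rewrite ffunE permE key.
Qed.
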